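(* Let $D$ be an $n\times n$ distance matrix. If $D(\phi_1,\mathbf X)\ne D$ for some satisfying assignment $\mathbf X$ of $\phi_1$, then there is no graph realisation $(G=(V,E),\Phi)$ of $D$ with $|V|=n+1$.
   Context: $[n]=\{1,\dots,n\}$. An $n\times n$ matrix $D$ with non-negative integer entries is a distance matrix if (i) $D_{ii}=0$ for all $i$ and $D_{ij}>0$ for all $i\ne j$; (ii) $D$ is symmetric; (iii) $D_{iw}+D_{wj}\ge D_{ij}$ for all $i,j,w\in[n]$. A graph realisation of $D$ is a pair $(G,\Phi)$, where $G=(V,E)$ is a finite simple undirected unweighted graph and $\Phi:[n]\to V$ is an injective map such that $d_G(\Phi(i),\Phi(j))=D_{ij}$ for all $i,j\in[n]$; here $d_G$ denotes the shortest-path distance in $G$ (equal to $\infty$ if no path exists). The associated graph $G_D=(V_D,E_D)$ of $D$ is the simple unweighted graph with $V_D=\{v_1,\dots,v_n\}$ and $\{v_i,v_j\}\in E_D$ if and only if $D_{ij}=1$; $d_{G_D}$ is its shortest-path distance. The 2-CNF formula $\phi_1$ over variables $x_1,\dots,x_n$ is the conjunction of: the clause $(\neg x_i\vee\neg x_j)$ for every pair $i,j\in[n]$ with $D_{ij}>2$; and the clauses $(x_i)$ and $(x_j)$ for every pair $i,j\in[n]$ with $D_{ij}=2$ and $d_{G_D}(v_i,v_j)>2$. For a satisfying assignment $\mathbf X$, $G_{\phi_1,\mathbf X}$ is the simple graph on $\{v_1,\dots,v_{n+1}\}$ whose induced subgraph on $\{v_1,\dots,v_n\}$ is $G_D$ and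 in which $v_{n+1}$ is adjacent to $v_i$ ($i\in[n]$) exactly when $x_i$ is true in $\mathbf X$; $D(\phi_1,\mathbf X)$ is the $n\times n$ matrix of shortest-path distances in $G_{\phi_1,\mathbf X}$ between $v_i$ and $v_j$, $i,j\in[n]$. *)

(* Defs.v *)
From mathcomp Require Import all_boot.
From mathcomp Require Import boolp.
Set Implicit Arguments. Unset Strict Implicit. Unset Printing Implicit Defensive.

(* [D] is an n x n matrix of natural numbers, indexed by 'I_n (= [n] shifted to 0..n-1). *)
Definition is_distance_matrix (n : nat) (D : 'I_n -> 'I_n -> nat) : Prop :=
  [/\ (forall i, D i i = 0),
      (forall i j, i != j -> 0 < D i j),
      (forall i j, D i j = D j i) &
      (forall i j w, D i j <= D i w + D w j)].

Definition simple_graph (V : finType) (e : rel V) : Prop :=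
  symmetric e /\ irreflexive e.

Fixpoint walkn (V : finType) (e : rel V) (k : nat) (u v : V) : bool :=
  if k is k'.+1 then [exists w, e u w && walkn e k' w v] else u == v.

(* Shortest-path distance: Some d with d the least walk length, None (= infinity)
   if no path exists. *)
Definition gdist (V : finType) (e : rel V) (u v : V) : option nat :=
  match pselect (exists k, walkn e k u v) with
  | left H => Some (ex_minn H)
  | right _ => None
  end.

Definition realisation (n : nat) (D : 'I_n -> 'I_n -> nat)
  (V : finType) (e : rel V) (Phi : 'I_n -> V) : Prop :=
  simple_graph e /\ injective Phi /\
  forall i j, gdist e (Phi i) (Phi j) = Some (D i j).

Definition GD (n : nat) (D : 'I_n -> 'I_n -> nat) : rel 'I_n :=
  fun i j => D i j == 1.

Definition ext_gt2 (d : option nat) : bool :=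
  if d is Some k then 2 < k else true.

Definition phi1_sat (n : nat) (D : 'I_n -> 'I_n -> nat) (X : 'I_n -> bool) : Prop :=
  (forall i j, 2 < D i j -> ~~ X i || ~~ X j) /\
  (forall i j, D i j = 2 -> ext_gt2 (gdist (GD D) i j) -> X i && X j).

(* G_{phi_1, X}: vertices Some i = v_i (i in [n]), None = v_{n+1} *)
Definition GX (n : nat) (D : 'I_n -> 'I_n -> nat) (X : 'I_n -> bool) : rel (option 'I_n) :=
  fun a b => match a, b with
             | Some i, Some j => GD D i j
             | Some i, None => X i
             | None, Some j => X j
             | None, None => false
             end.

Definition DX (n : nat) (D : 'I_n -> 'I_n -> nat) (X : 'I_n -> bool) :
  'I_n -> 'I_n -> option nat :=
  fun i j => gdist (GX D X) (Some i) (Some j).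

(* Main.v *)
Require Import Defs.
From mathcomp Require Import all_boot.
From mathcomp Require Import boolp zify.
Set Implicit Arguments. Unset Strict Implicit. Unset Printing Implicit Defensive.

Lemma gdist_SomeP (V : finType) (e : rel V) x y m :
  gdist e x y = Some m -> walkn e m x y /\ forall k, walkn e k x y -> m <= k.
Proof.
rewrite /gdist; case: pselect => // H [<-].
case: ex_minnP => m0 Hm0 Hmin; split => // k Hk; exact: Hmin.
Qed.

Lemma gdist_Some (V : finType) (e : rel V) x y m :
  walkn e m x y -> (forall k, walkn e k x y -> m <= k) -> gdist e x y = Some m.
Proof.
move=> Hw Hmin; rewrite /gdist; case: pselect => [H|H]; last first.
  by exfalso; apply: H; exists m.
congr Some; case: ex_minnP => m0 Hm0 Hmin0; apply/eqP.
by rewrite eqn_leq Hmin0 // Hmin.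
Qed.

Lemma walk_cat (V : finType) (e : rel V) k1 k2 x y z :
  walkn e k1 x y -> walkn e k2 y z -> walkn e (k1 + k2) x z.
Proof.
elim: k1 x => [|k1 IH] x /=; first by move/eqP->.
case/existsP=> w /andP[exw Hw] H2; apply/existsP; exists w.
by rewrite exw /=; exact: IH.
Qed.

Lemma walk_lift n (D : 'I_n -> 'I_n -> nat) X k a b :
  walkn (GD D) k a b -> walkn (GX D X) k (Some a) (Some b).
Proof.
elim: k a => [|k IH] a /=; first by move/eqP->.
case/existsP=> w /andP[ew Hw]; apply/existsP; exists (Some w).
apply/andP; split; [exact: ew | exact: IH].
Qed.

Lemma lower n (D : 'I_n -> 'I_n -> nat) X : is_distance_matrix D -> phi1_sat D X ->
  forall k, (forall i j, walkn (GX D X) k (Some i) (Some j) -> D i j <= k) /\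
            (forall a j, X a -> walkn (GX D X) k None (Some j) -> D a j <= k.+1).
Proof.
case=> D0 Dpos Dsym Dtri [C1 C2].
have Dab2 : forall a b, X a -> X b -> D a b <= 2.
  move=> a b Xa Xb; rewrite leqNgt; apply/negP=> /C1; by rewrite Xa Xb.
elim=> [|k [IH1 IH2]]; split.
- by move=> i j /= /eqP[->]; rewrite D0.
- by move=> a j _ /eqP.
- move=> i j /= /existsP[[w|] /andP[ew Hw]].
  + have H := IH1 _ _ Hw. have Diw : D i w = 1 by apply/eqP; exact: ew.
    have := Dtri i j w; lia.
  + exact: IH2 i j ew Hw.
- move=> a j Xa /= /existsP[[b|] /andP[eb Hb]] //.
  have H := IH1 _ _ Hb; have := Dtri a j b; have := Dab2 a b Xa eb; lia.
Qed.

Theorem mainTheorem14 (n : nat) (D : 'I_n -> 'I_n -> nat) :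
  is_distance_matrix D ->
  (exists X : 'I_n -> bool, phi1_sat D X /\ DX D X <> (fun i j => Some (D i j))) ->
  forall (V : finType) (e : rel V) (Phi : 'I_n -> V),
    #|V| = n.+1 -> ~ realisation D e Phi.
Proof.
move=> HD [X [HX Hne]] V e Phi cV [[esym eirr] [inj Hdist]].
have Hlow := lower HD HX.
case: HD => D0 Dpos Dsym Dtri.
case: HX => C1 C2.
have out1 : forall x y, (forall i, Phi i != x) -> (forall i, Phi i != y) -> x = y.
  move=> x y Hx Hy.
  set A := Phi @: [set: 'I_n].
  have cA : #|A| = n by rewrite card_imset // cardsT card_ord.
  have cC : #|~: A| == 1 by have := cardsC A; rewrite cA cV; lia.
  have xC : x \in ~: A.
    rewrite inE; apply/imsetP => -[i _ ex]; by move: (Hx i); rewrite ex eqxx.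
  have yC : y \in ~: A.
    rewrite inE; apply/imsetP => -[i _ ex]; by move: (Hy i); rewrite ex eqxx.
  case/cards1P: cC => z Hz.
  by move: xC yC; rewrite Hz !inE => /eqP-> /eqP->.
have ne_of_e : forall x y, e x y -> x != y.
  by move=> x y exy; apply/negP => /eqP E; rewrite E eirr in exy.
have up : forall d i j, D i j = d ->
    exists2 k, k <= d & walkn (GX D X) k (Some i) (Some j).
  elim/ltn_ind => d IH i j Hd.
  have [Hw Hmin] := gdist_SomeP (Hdist i j).
  rewrite Hd in Hw.
  case: d Hw IH Hd => [|d] Hw IH Hd.
    exists 0 => //; move: Hw => /= /eqP /inj ->; by rewrite /= eqxx.
  move: Hw => /= /existsP [w /andP[ew Hw]].
  case: (pickP (fun i' => Phi i' == w)) => [i' /eqP Ew | Nw].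
    subst w.
    have Dii' : D i i' = 1.
      have [_ Hm] := gdist_SomeP (Hdist i i').
      have : D i i' <= 1.
        by apply: Hm; apply/existsP; exists (Phi i'); rewrite ew /= eqxx.
      have : i != i' by apply/negP => /eqP E; rewrite E eirr in ew.
      move/Dpos; lia.
    have Di'j : D i' j <= d.
      have [_ Hm] := gdist_SomeP (Hdist i' j); exact: Hm.
    have [k Hk Hwk] := IH (D i' j) ltac:(lia) i' j erefl.
    exists k.+1; first lia.
    apply/existsP; exists (Some i'); apply/andP; split; last exact: Hwk; by rewrite /GX /GD Dii'.
  case: d Hw IH Hd => [|d] Hw IH Hd.
    by move: Hw (Nw j) => /= /eqP ->; rewrite eqxx.
  move: Hw => /= /existsP [w2 /andP[ew2 Hw2]].
  case: (pickP (fun i' => Phi i' == w2)) => [b /eqP Eb | Nw2]; last first.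
    have E : w = w2 by apply: out1 => i0; [rewrite Nw | rewrite Nw2].
    by move: (ne_of_e _ _ ew2); rewrite E eqxx.
  subst w2.
  have Dbj : D b j <= d.
    have [_ Hm] := gdist_SomeP (Hdist b j); exact: Hm.
  have Dib : D i b <= 2.
    have [_ Hm] := gdist_SomeP (Hdist i b); apply: Hm.
    apply/existsP; exists w; rewrite ew /=; apply/existsP; exists (Phi b).
    by rewrite ew2 /= eqxx.
  have [k Hk Hwk] := IH (D b j) ltac:(lia) b j erefl.
  case: (eqVneq i b) => [Eib | Nib].
    subst b; exists k => //; lia.
  have Dib0 := Dpos _ _ Nib.
  case: (eqVneq (D i b) 1) => [Dib1 | Dib1].
    exists k.+1; first lia.
    apply/existsP; exists (Some b); apply/andP; split; last exact: Hwk; by rewrite /GX /GD Dib1.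
  have Dib2 : D i b = 2 by lia.
  have viaX : X i && X b -> exists2 k, k <= d.+2 & walkn (GX D X) k (Some i) (Some j).
    case/andP => Xi Xb; exists k.+2; first lia.
    apply/existsP; exists None; apply/andP; split; first exact: Xi.
    apply/existsP; exists (Some b); apply/andP; split; first exact: Xb.
    exact: Hwk.
  case Eg: (gdist (GD D) i b) => [m|]; last first.
    by apply: viaX; apply: C2 => //; rewrite Eg.
  case: (leqP m 2) => Hm2; last first.
    by apply: viaX; apply: C2 => //; rewrite Eg.
  have [Hwm _] := gdist_SomeP Eg.
  exists (m + k); first lia.
  exact: walk_cat (walk_lift X Hwm) Hwk.
have HDX : forall i j, DX D X i j = Some (D i j).
  move=> i j; have [k Hk Hwk] := up _ i j erefl.
  have Hkl := (Hlow k).1 _ _ Hwk.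
  have Ek : k = D i j by lia.
  rewrite /DX; apply: gdist_Some; first by rewrite -Ek.
  by move=> k' Hk'; exact: (Hlow k').1 _ _ Hk'.
apply: Hne; apply: funext => i; apply: funext => j; exact: HDX.
Qed.
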